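(* Let $\mathcal F=(\{U_n\},\{V_n\})$ be a frame and $\mathbb{P}$, $\Omega$ as in the context. For $\omega\in\Omega$ define the sequence of finite sets $(L^\omega_k)_{k\ge1}$ by concatenating, for $i=1,2,3,\dots$ in order, $U_{\omega_i}$ copies of $I_1$ followed by $V_{\omega_i}$ copies of $I_{2^d}$. Then for $\mathbb{P}$-almost every $\omega$ and every $t\ge0$, $$\liminf_{n\to\infty}\frac1n\log\sum_{w\in\prod_{k=1}^nL^\omega_k}2^{-nt}\le -t\log2.$$
   Context: $d\ge1$; $I_1=\{(0,\dots,0)\}\subset\{0,1\}^d$ and $I_{2^d}=\{0,1\}^d$. A frame is a pair $\mathcal F=(\{U_n\}_{n\in\mathbb{N}},\{V_n\}_{n\in\mathbb{N}})$ of sequences of positive integers with $U_1\ge1$ and, for all $n\in\mathbb{N}$, $nU_n\le V_n$ and $(U_n+V_n)^3\le U_{n+1}$. $\Omega=\mathbb{N}^{\mathbb{N}}$ carries the Bernoulli measure $\mathbb{P}$ with $\mathbb{P}([\omega_1\dots\omega_n])=p_{\omega_1}\cdots p_{\omega_n}$, where $p_n=\frac{1}{Cn^2}$, $C=\sum_{n\ge1}n^{-2}$. *)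

(* Defs.v *)
From HB Require Import structures.
From mathcomp Require Import all_boot all_order all_algebra.
From mathcomp Require Import all_classical all_reals all_analysis.
Set Implicit Arguments. Unset Strict Implicit. Unset Printing Implicit Defensive.
Import Order.TTheory GRing.Theory Num.Theory.
Local Open Scope classical_set_scope.
Local Open Scope ring_scope.

(* Omega = N^N with N = {1,2,3,...}.  We encode a sequence
   (omega_1, omega_2, ...) of positive integers as  om : nat -> nat  with
   omega_(i+1) = (om i).+1  (a bijection). *)

(* cylinder [omega_1 ... omega_n] encoded by the list s of (omega_i - 1) *)
Definition cyl (s : seq nat) : set (nat -> nat) :=
  [set om | forall i, (i < size s)%N -> om i = nth 0%N s i].

Definition cylinders : set (set (nat -> nat)) := [set cyl s | s in setT].

Definition Omega := g_sigma_algebraType cylinders.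

Definition Cconst (R : realType) : R :=
  limn (fun m => \sum_(1 <= n < m) (n%:R ^-2 : R)).
Definition pw (R : realType) (n : nat) : R := (Cconst R * n%:R ^+ 2)^-1.

Definition bernoulli_cyl (R : realType) (P : probability Omega R) : Prop :=
  forall s : seq nat, P (cyl s) = (\prod_(k <- s) pw R k.+1)%:E.

Definition is_frame (U V : nat -> nat) : Prop :=
  (1 <= U 1)%N /\
  (forall n, (1 <= n)%N -> (0 < U n)%N /\ (0 < V n)%N) /\
  (forall n, (1 <= n)%N -> (n * U n <= V n)%N /\ ((U n + V n) ^ 3 <= U n.+1)%N).

Definition cube (d : nat) := {ffun 'I_d -> bool}.
Definition I1 (d : nat) : {set cube d} := [set [ffun=> false]].
Definition I2d (d : nat) : {set cube d} := [set: cube d].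

(* blocks for i = 1..m: U_{omega_i} copies of I_1 (false) followed by
   V_{omega_i} copies of I_{2^d} (true) *)
Definition blocks (U V : nat -> nat) (om : nat -> nat) (m : nat) : seq bool :=
  flatten [seq nseq (U (om i).+1) false ++ nseq (V (om i).+1) true
          | i <- iota 0 m].

(* L^omega_k for k >= 1 (the first k blocks have length >= k in a frame) *)
Definition Lset (d : nat) (U V : nat -> nat) (om : nat -> nat) (k : nat)
  : {set cube d} :=
  if nth false (blocks U V om k) k.-1 then I2d d else I1 d.

(* prod_{k=1}^n L^omega_k, as functions 'I_n -> {0,1}^d, coordinate j <-> k = j+1 *)
Definition prodL (d : nat) (U V : nat -> nat) (om : nat -> nat) (n : nat)
  : {set {ffun 'I_n -> cube d}} :=
  [set w : {ffun 'I_n -> cube d} | [forall j : 'I_n, w j \in Lset d U V om j.+1]].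

(* Main.v *)
Require Import Defs.
From HB Require Import structures.
From mathcomp Require Import all_boot all_order all_algebra.
From mathcomp Require Import all_classical all_reals all_analysis.
From mathcomp Require Import zify ring lra.
Import Order.TTheory GRing.Theory Num.Theory.
Local Open Scope classical_set_scope.
Local Open Scope ring_scope.

Module Helpers.
Import numFieldNormedType.Exports.


Section Comb.
Variables (U V : nat -> nat) (om : nat -> nat).

Lemma blocksS m : blocks U V om m.+1 =
  blocks U V om m ++ (nseq (U (om m).+1) false ++ nseq (V (om m).+1) true).
Proof.
by rewrite /blocks -addn1 iotaD map_cat flatten_cat /= cats0 add0n.
Qed.

Lemma blocks_prefix k k' : (k <= k')%N ->
  exists x, blocks U V om k' = blocks U V om k ++ x.
Proof.
elim: k' => [|k' IH]; first by rewrite leqn0 => /eqP->; exists [::]; rewrite cats0.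
rewrite leq_eqVlt => /orP[/eqP->|]; first by exists [::]; rewrite cats0.
rewrite ltnS => /IH[x Hx]; rewrite blocksS Hx -catA; eexists; reflexivity.
Qed.

Lemma size_blocksS m : size (blocks U V om m.+1) =
  (size (blocks U V om m) + (U (om m).+1 + V (om m).+1))%N.
Proof. by rewrite blocksS size_cat size_cat !size_nseq. Qed.

Hypothesis Upos : forall n, (0 < U n.+1)%N.

Lemma size_blocks_ge k : (k <= size (blocks U V om k))%N.
Proof.
elim: k => // k IH; rewrite size_blocksS; have := Upos (om k); lia.
Qed.

Definition beta j := nth false (blocks U V om j.+1) j.

Lemma beta_nth m j : (j < size (blocks U V om m))%N ->
  beta j = nth false (blocks U V om m) j.
Proof.
move=> jm; rewrite /beta; case: (leqP j.+1 m) => h.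
  have [x ->] := @blocks_prefix _ _ h; rewrite nth_cat.
  by have := size_blocks_ge j.+1; case: ltnP.
have [x ->] := @blocks_prefix _ _ (ltnW h); by rewrite nth_cat jm.
Qed.

Variable d : nat.

Lemma card_prodL n :
  #|prodL d U V om n| = (2 ^ (d * \sum_(j < n) beta j))%N.
Proof.
have -> : #|prodL d U V om n| =
   #|(family (fun j : 'I_n => mem (Lset d U V om j.+1)) : simpl_pred _)|.
  by apply: eq_card => w; rewrite /prodL inE.
rewrite card_family foldrE big_map big_enum /=.
elim: n => [|n IH]; first by rewrite big_ord0 big_ord0 muln0.
rewrite big_ord_recr big_ord_recr /= IH mulnDr expnD; congr (_ * _)%N.
rewrite /Lset -/(beta n); case: (beta n) => /=.
  by rewrite muln1 /I2d cardsT card_ffun card_bool card_ord.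
by rewrite muln0 /I1 cards1.
Qed.
End Comb.


Section Frame.
Variables (U V : nat -> nat).
Hypothesis FU : is_frame U V.

Lemma U_step n : (1 <= n)%N -> (U n + V n <= U n.+1)%N.
Proof.
move=> n1; case: FU => _ [_ /(_ n n1) [_ H]].
apply: leq_trans H; set x := (U n + V n)%N.
by rewrite expnS (leq_pmulr _) // expn_gt0 orbC; case: FU => _ [/(_ n n1)[+ _] _]; rewrite /x; lia.
Qed.

Lemma U_mono a b : (1 <= a)%N -> (a <= b)%N -> (U a <= U b)%N.
Proof.
move=> a1; elim: b => [|b IH]; first by lia.
rewrite leq_eqVlt => /orP[/eqP->//|]; rewrite ltnS => ab.
have := @U_step b (leq_trans a1 ab); have := IH ab; lia.
Qed.

Lemma U_pow n : (2 ^ n <= U n.+1)%N.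
Proof.
elim: n => [|n IH]; first by case: FU.
have h := @U_step n.+1 (ltn0Sn n).
case: FU => _ [_ /(_ n.+1 (ltn0Sn n)) [H _]].
rewrite expnS; have : (U n.+1 <= V n.+1)%N by apply: leq_trans H; apply: leq_pmull.
lia.
Qed.

Lemma UV_le a c : (1 <= a)%N -> (a <= c)%N -> (U a + V a <= U c + V c)%N.
Proof.
move=> a1; rewrite leq_eqVlt => /orP[/eqP->//|ac].
apply: leq_trans (@U_step a a1) _; apply: leq_trans (leq_addr _ _).
exact: U_mono.
Qed.

Lemma UV_cube c : (1 <= c)%N -> ((U c + V c) ^ 3 <= U c.+1)%N.
Proof. by move=> c1; case: FU => _ [_ /(_ c c1)[]]. Qed.

Variable om : nat -> nat.

Lemma size_blocks_le i s : (forall j, (j < i)%N -> (U (om j).+1 + V (om j).+1 <= s)%N) ->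
  (size (blocks U V om i) <= i * s)%N.
Proof.
elim: i => [|i IH] H; first by rewrite /blocks.
rewrite size_blocksS mulSn addnC leq_add //; first by apply: H.
by apply: IH => j ji; apply: H; rewrite ltnS ltnW.
Qed.

Lemma Upos n : (0 < U n.+1)%N.
Proof. by case: FU => _ [/(_ n.+1 (ltn0Sn n))[]]. Qed.

Lemma good_index i c : (1 <= c)%N ->
  (forall j, (j < i)%N -> (om j < c)%N) -> (c <= om i)%N -> (i <= U c)%N ->
  let n := (size (blocks U V om i) + U (om i).+1)%N in
  (i <= n)%N /\ (i * \sum_(j < n) beta U V om j <= n)%N.
Proof.
move=> c1 Hj Hi HU n.
set S := size (blocks U V om i).
have iS : (i <= S)%N by apply: size_blocks_ge => k; exact: Upos.
split; first by rewrite /n; lia.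
set s := (U c + V c)%N.
have Ss : (S <= i * s)%N.
  apply: size_blocks_le => j /Hj ji; exact: UV_le.
have s3 : (s ^ 3 <= U (om i).+1)%N.
  apply: leq_trans (@UV_cube c c1) _; exact: U_mono.
have sum_le : (\sum_(j < n) beta U V om j <= S)%N.
  rewrite -(big_mkord xpredT (fun j => nat_of_bool (beta U V om j))).
  rewrite (big_cat_nat _ (leq_addr (U (om i).+1) S)) //=.
  rewrite [X in (_ + X)%N]big1_seq ?addn0.
    have := @leq_sum _ (index_iota 0 S) xpredT (fun j => nat_of_bool (beta U V om j)) (fun _ => 1%N) (fun j _ => leq_b1 _).
    by rewrite sum_nat_const_nat subn0 muln1.
  move=> j /andP[_]; rewrite mem_index_iota => /andP[Sj jn].
  rewrite (@beta_nth _ _ _ (@Upos) i.+1); last first.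
    by rewrite size_blocksS; rewrite /n in jn; lia.
  rewrite blocksS nth_cat -/S ltnNge Sj /= nth_cat size_nseq.
  have -> : (j - S < U (om i).+1)%N by rewrite /n in jn; lia.
  by rewrite nth_nseq; case: ifP.
have is_ : (i <= s)%N by apply: leq_trans HU _; exact: leq_addr.
have : (i * S <= n)%N.
  apply: (leq_trans _ (leq_addl S _)); apply: leq_trans s3.
  apply: leq_trans (leq_mul (leqnn i) Ss) _.
  rewrite expnS expnS expn1; nia.
by move=> h; apply: leq_trans h; apply: leq_mul.
Qed.
End Frame.


Lemma liminf_le (R : realType) (u : nat -> \bar R) (a : R) :
  (forall e : R, 0 < e -> forall M, exists2 n, (M <= n)%N & (u n <= (a + e)%:E)%E) ->
  (limn_einf u <= a%:E)%E.
Proof.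
move=> H; rewrite limn_einf_lim.
rewrite (cvg_lim _ (@cvg_einfs_sup R u)) //=.
apply: ge_ereal_sup => _ [M _ <-].
apply/lee_addgt0Pr => e e0.
have [n Mn un] := H e e0 M.
rewrite -EFinD; apply: le_trans un.
by apply: ereal_inf_lbound; exists n.
Qed.

Definition cc (h i : nat) := (h + trunc_log 2 i + 2)%N.

Lemma cc_mono h j i : (j <= i)%N -> (cc h j <= cc h i)%N.
Proof. by move=> ji; rewrite /cc leq_add2r leq_add2l leq_trunc_log. Qed.

Lemma exists_good (U V : nat -> nat) (om : nat -> nat) : is_frame U V ->
  (forall h, exists i, (cc h i <= om i)%N) ->
  forall a, exists2 n, (a <= n)%N & (a * \sum_(j < n) beta U V om j <= n)%N.
Proof.
move=> FU Hh a.
pose h := (a + \max_(j < a) om j)%N.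
have ex : exists i, (cc h i <= om i)%N by exact: Hh.
pose i := ex_minn ex.
have [ci imin] : (cc h i <= om i)%N /\ forall k, (cc h k <= om k)%N -> (i <= k)%N.
  by rewrite /i; case: ex_minnP.
have Hj : forall j, (j < i)%N -> (om j < cc h i)%N.
  move=> j ji; rewrite ltnNge; apply/negP => hj.
  have := imin j (leq_trans (@cc_mono h j i (ltnW ji)) hj); lia.
have ai : (a <= i)%N.
  rewrite leqNgt; apply/negP => ia.
  have : (om i <= \max_(j < a) om j)%N by exact: (@leq_bigmax _ (fun j : 'I_a => om j) (Ordinal ia)).
  move: ci; rewrite /cc /h; lia.
have iU : (i <= U (cc h i))%N.
  have := @U_pow U V FU (h + trunc_log 2 i + 1).
  have := @trunc_log_ltn 2 i isT.
  have -> : (cc h i = (h + trunc_log 2 i + 1).+1)%N by rewrite /cc; lia.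
  move=> h1 h2; apply: leq_trans h2; apply: ltnW; apply: leq_trans h1 _.
  by rewrite leq_exp2l // -addnA; lia.
have [h1 h2] := @good_index U V FU om i (cc h i) (ltn_addl _ (ltn0Sn 1)) Hj ci iU.
eexists; first exact: leq_trans ai h1.
by apply: leq_trans h2; rewrite leq_mul2r ai orbT.
Qed.


Lemma value_eq (R : realType) d U V om (n : nat) (t : R) : (0 < n)%N ->
  (n%:R)^-1 * ln (\sum_(w in prodL d U V om n) (2 : R) `^ (- (n%:R * t))) =
  (d * \sum_(j < n) beta U V om j)%N%:R / n%:R * ln 2 - t * ln 2.
Proof.
move=> n0.
rewrite sumr_const card_prodL -[X in ln X]mulr_natr lnM ?posrE ?powR_gt0 ?ltr0n ?expn_gt0 //.
rewrite ln_powR natrX lnXn // -[X in _ + X]mulr_natr.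
have nz : (n%:R : R) != 0 by rewrite pnatr_eq0 -lt0n.
by field.
Qed.

Lemma det_liminf (R : realType) d U V om (t : R) : is_frame U V ->
  (forall h, exists i, (cc h i <= om i)%N) ->
  (limn_einf (fun n : nat =>
        ((n%:R)^-1 * ln (\sum_(w in prodL d U V om n) (2 : R) `^ (- (n%:R * t))))%:E)
      <= (- t * ln 2)%:E)%E.
Proof.
move=> FU Hh; apply: liminf_le => e e0 M.
set x : R := d%:R * ln 2 / e.
pose a := (M + Num.truncn x).+1.
have [n an aN] := @exists_good U V om FU Hh a.
have n0 : (0 < n)%N by apply: leq_trans an; rewrite /a.
exists n; first by apply: leq_trans an; rewrite /a; lia.
rewrite lee_fin value_eq // mulNr addrC lerD2l.
have L0 : 0 < ln (2 : R) by apply: ln_gt0; rewrite ltr1n.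
have a0 : (0 : R) < a%:R by rewrite ltr0n.
have n0' : (0 : R) < n%:R by rewrite ltr0n.
have h1 : (d * \sum_(j < n) beta U V om j)%N%:R / n%:R <= d%:R / a%:R :> R.
  rewrite ler_pdivrMr // mulrAC ler_pdivlMr // -!natrM ler_nat.
  by rewrite mulnAC -mulnA leq_mul2l aN orbT.
have h2 : x < a%:R.
  apply: lt_le_trans (truncnS_gt x) _; by rewrite ler_nat /a ltnS leq_addl.
apply: le_trans (ler_wpM2r (ltW L0) h1) _.
rewrite /x ltr_pdivrMr // in h2.
rewrite mulrAC ler_pdivrMr // [e * _]mulrC; exact: ltW.
Qed.


Section Cst.
Variable R : realType.
Definition Ss (m : nat) : R := \sum_(1 <= n < m) (n%:R ^-2 : R).

Lemma SsS m : (1 <= m)%N -> Ss m.+1 = Ss m + (m%:R ^-2).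
Proof. by move=> m1; rewrite /Ss big_nat_recr. Qed.

Lemma Ss_ndecr : {homo Ss : n m / (n <= m)%N >-> n <= m}.
Proof.
move=> n m; elim: m => [|m IH]; first by rewrite leqn0 => /eqP->.
rewrite leq_eqVlt => /orP[/eqP e|]; first by rewrite e.
rewrite ltnS => /IH h.
apply: le_trans h _; clear IH; case: m => [|m]; first by rewrite /Ss !big_geq.
rewrite [Ss m.+2]SsS // lerDl invr_ge0 exprn_ge0 // ler0n.
Qed.

Lemma Ss_le2 m : Ss m <= 2.
Proof.
have H k : Ss k.+2 + (k.+1%:R)^-1 <= 2.
  elim: k => [|k IH]; first by rewrite /Ss big_nat1 /= expr1n invr1; lra.
  rewrite SsS //; apply: le_trans IH.
  set y : R := k.+1%:R.
  have y0 : 0 < y by rewrite ltr0n.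
  have -> : (k.+2%:R : R) = y + 1 by rewrite /y -natr1.
  have e : y^-1 - (y + 1)^-1 - ((y+1)^+2)^-1 = (y * (y+1)^+2)^-1.
    by field; rewrite -?lt0r ?y0 //; apply/andP; split; lra.
  have : 0 <= (y * (y+1)^+2)^-1 by rewrite invr_ge0 mulr_ge0 // ?exprn_ge0; lra.
  rewrite -e; set a1 := y^-1; set b1 := (y + 1)^-1; set c1 := (y + 1) ^- 2; lra.
case: m => [|[|k]]; first by rewrite /Ss big_geq.
  by rewrite /Ss big_geq.
apply: le_trans (H k); by rewrite lerDl invr_ge0 ler0n.
Qed.

Lemma Ss_cvg : cvgn (Ss : R^nat).
Proof.
apply: nondecreasing_is_cvgn; first exact: Ss_ndecr.
by exists 2 => _ [m _ <-]; exact: Ss_le2.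
Qed.

Lemma CconstE : Cconst R = limn Ss.
Proof. by []. Qed.

Lemma Ss_le_C m : Ss m <= Cconst R.
Proof. by rewrite CconstE; apply: nondecreasing_cvgn_le; [exact: Ss_ndecr|exact: Ss_cvg]. Qed.

Lemma C_le2 : Cconst R <= 2.
Proof.
rewrite CconstE; apply: limr_le; first exact: Ss_cvg.
by near=> n; exact: Ss_le2.
Unshelve. all: by end_near.
Qed.

Lemma Ss_gap c M : (c.+1 <= M)%N ->
  Ss c.+1 + (c.+1%:R)^-1 - (M%:R)^-1 <= Ss M.
Proof.
elim: M => [//|M IH]; rewrite leq_eqVlt => /orP[/eqP e|]; first by rewrite -e addrK.
rewrite ltnS => h; have {}IH := IH h.
have M1 : (1 <= M)%N by apply: leq_trans h.
rewrite [Ss M.+1]SsS //.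
set y : R := M%:R.
have y0 : 0 < y by rewrite ltr0n.
have -> : (M.+1%:R : R) = y + 1 by rewrite /y -natr1.
have e : (y^+2)^-1 - (y^-1 - (y + 1)^-1) = (y^+2 * (y+1))^-1.
  by field; rewrite -?lt0r ?y0 //; apply/andP; split; lra.
have : 0 <= (y^+2 * (y+1))^-1 by rewrite invr_ge0 mulr_ge0 // ?exprn_ge0; lra.
rewrite -e; move: IH; rewrite -/y.
set a1 := y^-1; set b1 := (y + 1)^-1; set c1 := (y ^+ 2)^-1; set S1 := Ss c.+1; set S2 := Ss M.
set k := (c.+1%:R : R)^-1. lra.
Qed.

Lemma C_gap c : Ss c.+1 + (2 * c.+1%:R)^-1 <= Cconst R.
Proof.
apply: le_trans (Ss_le_C (2 * c.+1)%N).
have h : (c.+1 <= 2 * c.+1)%N by lia.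
apply: le_trans (@Ss_gap c _ h).
rewrite -addrA lerD2l natrM.
have k0 : (0 : R) < c.+1%:R by rewrite ltr0n.
have -> : (2%:R * c.+1%:R : R)^-1 = (c.+1%:R)^-1 / 2 by rewrite invfM mulrC.
set k := (c.+1%:R : R)^-1; lra.
Qed.

Lemma C_pos : 0 < Cconst R.
Proof.
apply: lt_le_trans (C_gap 0); rewrite /Ss big_geq // add0r invr_gt0; lra.
Qed.

Lemma qsumE c : \sum_(x < c) pw R x.+1 = Ss c.+1 / Cconst R.
Proof.
rewrite /Ss big_add1 /= big_mkord mulr_suml; apply: eq_bigr => x _.
by rewrite /pw invfM mulrC.
Qed.

Lemma q_bound c : 0 <= \sum_(x < c) pw R x.+1 <= 1 - (4 * c.+1%:R)^-1.
Proof.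
rewrite qsumE; have C0 := C_pos; have C2 := C_le2; have G := C_gap c.
have S0 : 0 <= Ss c.+1 by apply: sumr_ge0 => n _; rewrite invr_ge0 exprn_ge0 // ler0n.
apply/andP; split; first by rewrite divr_ge0 // ltW.
rewrite ler_pdivrMr //.
have k0 : (0 : R) < c.+1%:R by rewrite ltr0n.
have E2 : (2 * c.+1%:R : R)^-1 = 2 * (4 * c.+1%:R)^-1.
  by field; rewrite addrC natr1 pnatr_eq0.
rewrite E2 in G.
have : 0 < (4 * c.+1%:R : R)^-1 by rewrite invr_gt0; lra.
move=> zp; have C2p : 0 <= 2 - Cconst R by rewrite subr_ge0.
have := mulr_ge0 (ltW zp) C2p.
move: G; set z := (4 * c.+1%:R : R)^-1; set S := Ss c.+1; set C := Cconst R.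
nra.
Qed.
End Cst.


Section Prod.
Variable R : realType.
Definition qq c : R := \sum_(x < c) pw R x.+1.
Definition QQ h b : R := \prod_(0 <= i < b) qq (cc h i).

Lemma qq_01 c : 0 <= qq c <= 1.
Proof.
have /andP[h1 h2] := q_bound R c; rewrite /qq h1 /=; apply: le_trans h2 _.
rewrite lerBlDr lerDl invr_ge0 mulr_ge0 // ler0n.
Qed.

Lemma QQ_ge0 h b : 0 <= QQ h b.
Proof. by apply: prodr_ge0 => i _; have /andP[] := qq_01 (cc h i). Qed.

Lemma QQ_le1 h b : QQ h b <= 1.
Proof. by apply: prodr_ile1 => i _; exact: qq_01. Qed.

Lemma bernoulli_ineq (x : R) n : 0 <= x <= 1 -> (1 - x) ^+ n * (1 + n%:R * x) <= 1.
Proof.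
move=> /andP[x0 x1]; elim: n => [|n IH]; first by rewrite expr0 mul0r addr0 mul1r.
apply: le_trans IH; rewrite exprSr -mulrA ler_wpM2l ?exprn_ge0 ?subr_ge0 //.
rewrite -natr1; set m : R := n%:R.
have m0 : 0 <= m by rewrite ler0n.
nra.
Qed.

Lemma pow_big k : (6 <= k)%N -> (8 * k <= 2 ^ k)%N.
Proof.
elim: k => [//|k IH]; rewrite leq_eqVlt => /orP[/eqP<-//|]; rewrite ltnS => hk; have h := IH hk.
rewrite expnS; lia.
Qed.

Lemma block_half h k : (h + 6 <= k)%N ->
  2 * \prod_(2 ^ k <= i < 2 ^ k.+1) qq (cc h i) <= 1.
Proof.
move=> hk.
set x : R := (4 * (h + k + 2).+1%:R)^-1.
have qi : forall i, (2 ^ k <= i < 2 ^ k.+1)%N -> 0 <= qq (cc h i) <= 1 - x.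
  move=> i ik; have -> : cc h i = (h + k + 2)%N.
    by rewrite /cc (@trunc_log_eq 2 k i).
  by have /andP[a b] := q_bound R (h + k + 2); rewrite /qq a b.
have H : \prod_(2 ^ k <= i < 2 ^ k.+1) qq (cc h i) <= (1 - x) ^+ (2 ^ k.+1 - 2 ^ k).
  rewrite -prodr_const_nat big_seq_cond [in leRHS]big_seq_cond.
  by apply: ler_prod => i /andP[ii _]; apply: qi; rewrite -mem_index_iota.
have e : (2 ^ k.+1 - 2 ^ k = 2 ^ k)%N by rewrite expnS; lia.
rewrite e in H.
have x0 : 0 < x by rewrite invr_gt0 mulr_gt0 // ltr0n.
have x1 : x <= 1.
  rewrite invr_le1 ?unitfE ?mulf_neq0 ?pnatr_eq0 //.
  by rewrite -natrM ler1n.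
have x01 : 0 <= x <= 1 by rewrite (ltW x0) x1.
have B := @bernoulli_ineq x (2 ^ k) x01.
have mx : 1 <= (2 ^ k)%:R * x.
  rewrite /x ler_pdivlMr ?mulr_gt0 ?ltr0n // mul1r -natrM ler_nat.
  have hk6 : (6 <= k)%N by lia.
  have := @pow_big k hk6.
  lia.
have p0 : 0 <= (1 - x) ^+ (2 ^ k) by rewrite exprn_ge0 // subr_ge0.
apply: le_trans (ler_wpM2l _ H) _ => //.
apply: le_trans B; rewrite mulrC ler_wpM2l //; lra.
Qed.

Lemma QQ_small h (e : R) : 0 < e -> exists b, QQ h b <= e.
Proof.
move=> e0.
have key : forall j, QQ h (2 ^ (h + 6 + j)) * (2 ^ j)%:R <= 1.
  elim=> [|j IH]; first by rewrite addn0 mulr1 QQ_le1.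
  rewrite /QQ addnS (big_cat_nat (n:=2 ^ (h + 6 + j))) //=; last first.
    by rewrite leq_exp2l // ltnW.
  rewrite -/(QQ h (2 ^ (h + 6 + j))) [(2 ^ j.+1)%N]expnS natrM.
  have B := @block_half h (h + 6 + j) (leq_addr j (h + 6)).
  have q0 := QQ_ge0 h (2 ^ (h + 6 + j)).
  set P1 := QQ h _ in q0 IH *; set P2 := \prod_(_ <= i < _) _ in B *.
  have p20 : 0 <= P2 by apply: prodr_ge0 => i _; have /andP[] := qq_01 (cc h i).
  have : 0 <= P1 * (2 ^ j)%:R by rewrite mulr_ge0 // ler0n.
  set w : R := (2 ^ j)%:R in IH *.
  have -> : P1 * P2 * (2%:R * w) = (P1 * w) * (2 * P2) by ring.
  move=> pw0; apply: le_trans IH.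
  by rewrite -[leRHS]mulr1 ler_wpM2l.
pose j := Num.truncn (e^-1).
exists (2 ^ (h + 6 + j))%N.
have := key j; set P1 := QQ _ _ => K.
have jb : e^-1 < (2 ^ j)%:R.
  apply: lt_le_trans (truncnS_gt _) _; rewrite ler_nat.
  by apply: ltn_expl.
have w0 : (0 : R) < (2 ^ j)%:R by rewrite ltr0n expn_gt0.
rewrite -(ler_pM2r w0); apply: le_trans K _.
by rewrite -ler_pdivrMl // mulr1; exact: ltW.
Qed.
End Prod.


Fixpoint Ls (c : nat -> nat) (b : nat) : seq (seq nat) :=
  if b is b'.+1 then [seq rcons s x | s <- Ls c b', x <- iota 0 (c b')]
  else [:: [::]].

Lemma mem_Ls c b (om : nat -> nat) : (forall i, (i < b)%N -> (om i < c i)%N) ->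
  map om (iota 0 b) \in Ls c b.
Proof.
elim: b => [|b IH] H; first by rewrite inE.
rewrite -addn1 iotaD map_cat /= cats1 add0n.
rewrite addn1 /=. apply: (@allpairs_f _ _ _ (fun s x => rcons s x)).
  by apply: IH => i ib; apply: H; rewrite ltnS ltnW.
by rewrite mem_iota add0n H.
Qed.

Lemma in_cyl (om : nat -> nat) b : cyl (map om (iota 0 b)) om.
Proof.
move=> i; rewrite size_map size_iota => ib.
by rewrite (nth_map 0%N) ?size_iota // nth_iota.
Qed.

Lemma sum_Ls (R : realType) c b :
  \sum_(s <- Ls c b) \prod_(k <- s) pw R k.+1 =
  \prod_(0 <= i < b) \sum_(x < c i) pw R x.+1.
Proof.
elim: b => [|b IH]; first by rewrite big_seq1 big_nil big_geq.
rewrite /= big_allpairs_dep /= big_nat_recr //= -IH mulr_suml.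
apply: eq_bigr => s _; rewrite -(big_mkord xpredT (fun x => pw R x.+1)) mulr_sumr /index_iota subn0; apply: eq_bigr => x _.
by rewrite big_rcons.
Qed.

Lemma cyl_meas s : measurable (cyl s : set Omega).
Proof. apply: sub_gen_smallest; by exists s. Qed.

Definition Ucyl (L : seq (seq nat)) : set Omega :=
  \big[setU/set0]_(k < size L) cyl (nth [::] L k).

Lemma Ucyl_meas L : measurable (Ucyl L).
Proof. by apply: bigsetU_measurable => k _; exact: cyl_meas. Qed.

Lemma P_Ucyl (R : realType) (P : probability Omega R) L : bernoulli_cyl P ->
  (P (Ucyl L) <= (\sum_(s <- L) \prod_(k <- s) pw R k.+1)%:E)%E.
Proof.
move=> BP.
have := @content_subadditive _ R Omega P (Ucyl L) (fun k => cyl (nth [::] L k)) (size L).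
move=> H; apply: le_trans (H _ (Ucyl_meas L) _) _.
- by move=> k _; exact: cyl_meas.
- by [].
rewrite (big_nth [::]) big_mkord -sumEFin lee_sum // => k _.
by rewrite -[leRHS](BP (nth [::] L k)).
Qed.

End Helpers.
Import Helpers.


Lemma in_Ucyl L s (om : Omega) : s \in L -> cyl s om -> Ucyl L om.
Proof.
move=> sL co; have -> : Ucyl L = \bigcup_(k < size L) cyl (nth [::] L k) by rewrite /Ucyl bigcup_mkord.
exists (index s L).
  by rewrite /= index_mem.
by rewrite nth_index.
Qed.

Theorem mainTheorem3 (R : realType) (d : nat) (U V : nat -> nat)
  (P : probability Omega R) :
  (1 <= d)%N -> is_frame U V -> bernoulli_cyl P ->
  {ae P, forall om : Omega, forall t : R, 0 <= t ->
     (limn_einf (fun n : nat =>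
        ((n%:R)^-1 * ln (\sum_(w in prodL d U V om n) (2 : R) `^ (- (n%:R * t))))%:E)
      <= (- t * ln 2)%:E)%E}.
Proof.
move=> d1 FU BP.
pose M h : set Omega := \bigcap_b Ucyl (Ls (cc h) b).
have Mm h : measurable (M h) by apply: bigcapT_measurable => b; exact: Ucyl_meas.
have Mneg : forall h, P.-negligible (M h).
  move=> h; exists (M h); split => //.
  apply/eqP; rewrite -measure_le0; apply/lee_addgt0Pr => e e0.
  have [b Hb] := @QQ_small R h e e0.
  rewrite add0e; apply: (@le_trans _ _ (P (Ucyl (Ls (cc h) b)))).
  apply: le_measure; rewrite ?inE //; first exact: Ucyl_meas.
    by move=> x Mx; exact: Mx.
  apply: le_trans (@P_Ucyl R P (Ls (cc h) b) BP) _.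
  by rewrite sum_Ls lee_fin.
apply: negligibleS (negligible_bigcup Mneg).
move=> om /= Hnot.
have [[h Mh]|nM] := pselect (exists h, M h om); first by exists h.
exfalso; apply: Hnot => t t0.
apply: det_liminf FU _ => h.
have [//|nex] := pselect (exists i, (cc h i <= om i)%N).
exfalso; apply: nM; exists h => b _.
apply: (@in_Ucyl _ (map om (iota 0 b))); last exact: in_cyl.
apply: mem_Ls => i _; rewrite ltnNge; apply/negP => hi; apply: nex; by exists i.
Qed.
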